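(* Let $\mathfrak{A}[\tau]$ be a semi-associative topological partial *-algebra with multiplication core $\mathfrak{B}$ and unit $e\in\mathfrak{B}$, and let $\mathcal{M}\subseteq\mathcal{P}_{\mathfrak{B}}(\mathfrak{A})$ be sufficient. Take $\mathfrak{K}=\mathfrak{A}^+_{\mathcal{M}}$. Then $\|x\|_b:=\inf\{\gamma>0:-\gamma e\le x\le\gamma e\}$ is a norm on the real vector space $(\mathfrak{A}_b(\mathcal{M}))_h$ of hermitian $\mathfrak{K}$-bounded elements.
   Context: A partial *-algebra is a complex vector space $\mathfrak{A}$ with conjugate-linear involution and distributive partial multiplication on $\Gamma\subset\mathfrak{A}\times\mathfrak{A}$ with $(x,y)\in\Gamma$ iff $(y^*,x^* )\in\Gamma$, then $(xy)^*=y^*x^*$; $L(y)=\{x:(x,y)\in\Gamma\}$, $R(x)=\{y:(x,y)\in\Gamma\}$; $R\mathfrak{A}$, $L\mathfrak{A}$ universal right/left multipliers; unit $e=e^*\in R\mathfrak{A}\cap L\mathfrak{A}$ with $xe=ex=x$. Semi-associative: $y\in R(x)$ implies $yz\in R(x)$ and $(xy)z=x(yz)$ for $z\in R\mathfrak{A}$. Topological partial *-algebra: Hausdorff locally convex topology $\tau$ such that each map $y\in R(x)\mapsto xy$ is closed. $\tau^*$: seminorms $\max\{p(x),p(x^* )\}$. A multiplication core is a subspace $\mathfrak{B}\subseteq R\mathfrak{A}$ with: $e\in\mathfrak{B}$ if a unit exists; $\mathfrak{B}\mathfrak{B}\subseteq\mathfrak{B}$; $\mathfrak{B}$ $\tau^*$-dense;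 $x\mapsto xb$ $\tau$-continuous for $b\in\mathfrak{B}$; $b^*(xc)=(b^*x)c$. An ips-form with core $\mathfrak{B}$ is a positive sesquilinear form $\varphi$ on $\mathfrak{A}\times\mathfrak{A}$ with $\mathfrak{B}\subset R\mathfrak{A}$, $\{x+N_\varphi:x\in\mathfrak{B}\}$ dense in the completion of $\mathfrak{A}/N_\varphi$ ($N_\varphi=\{x:\varphi(x,x)=0\}$), $\varphi(xa,b)=\varphi(a,x^*b)$ and $\varphi(x^*a,yb)=\varphi(a,(xy)b)$ for $x\in L(y)$, $a,b\in\mathfrak{B}$. $\mathcal{P}_{\mathfrak{B}}(\mathfrak{A})$: such forms that are $\tau$-continuous. $\mathcal{M}$ is sufficient if $\varphi(x,x)=0$ for all $\varphi\in\mathcal{M}$ implies $x=0$. $\mathfrak{A}^+_{\mathcal{M}}=\{x:\varphi(xa,a)\ge0\ \forall\varphi\in\mathcal{M},a\in\mathfrak{B}\}$; it defines the order $x\le y\iff y-x\in\mathfrak{A}^+_{\mathcal{M}}$ on $\mathfrak{A}_h=\{x:x=x^*\}$. With $\Re(x)=\frac12(x+x^* )$, $\Im(x)=\frac1{2i}(x-x^* )$, an element $x$ is $\mathfrak{K}$-bounded if there is $\gamma\ge0$ with $\pm\Re(x)\le\gamma e$ and $\pm\Im(x)\le\gamma e$; $\mathfrak{A}_b(\mathcal{M})$ denotes the set of such elements for $\mathfrak{K}=\mathfrak{A}^+_{\mathcal{M}}$ and $(\mathfrak{A}_b(\mathcal{M}))_h$ its hermitian part. *)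

(* Defs.v *)
From HB Require Import structures.
From mathcomp Require Import all_boot all_order all_algebra.
From mathcomp Require Import all_classical all_reals all_analysis.
From mathcomp Require Import complex.
Import Order.TTheory GRing.Theory Num.Theory.
Import numFieldTopology.Exports.
Set Implicit Arguments.
Unset Strict Implicit.
Unset Printing Implicit Defensive.
Local Open Scope classical_set_scope.
Local Open Scope ring_scope.
Local Open Scope complex_scope.

(* The locally convex
   Hausdorff topology tau of the partial *-algebra is the topology of a
   (locally convex) tvsType over R[i], together with hausdorff_space.
   A partial *-algebra is given by
     star : A -> A        (the involution)
     G    : A -> A -> Prop (the set Gamma of composable pairs: G x y <-> (x,y) in Gamma)
     mul  : A -> A -> A    (the product; its value is only meaningful on G). *)

(* the complex numbers, as a numClosedFieldType so that they carry their
   usual (modulus) topology *)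
Definition Cplx (R : realType) : numClosedFieldType := R[i].

Section PartialStarAlgebra.
Variable R : realType.
Variable A : tvsType R[i].
Variable star : A -> A.
Variable G : A -> A -> Prop.
Variable mul : A -> A -> A.

Definition Lmul (y : A) : set A := [set x | G x y].
Definition Rmul (x : A) : set A := [set y | G x y].
Definition RA : set A := [set y | forall x, G x y].
Definition LA : set A := [set x | forall y, G x y].

Definition is_partial_star_algebra : Prop :=
  (forall x, star (star x) = x) /\
  (forall (l : Cplx R) x y, star (l *: x + y) = (l^*)%R *: star x + star y) /\
  (forall x y, G x y -> G (star y) (star x)) /\
  (forall (l : Cplx R) x y1 y2, G x y1 -> G x y2 ->
      G x (l *: y1 + y2) /\ mul x (l *: y1 + y2) = l *: mul x y1 + mul x y2) /\
  (forall (l : Cplx R) x1 x2 y, G x1 y -> G x2 y ->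
      G (l *: x1 + x2) y /\ mul (l *: x1 + x2) y = l *: mul x1 y + mul x2 y) /\
  (forall x y, G x y -> star (mul x y) = mul (star y) (star x)).

Definition is_unit (e : A) : Prop :=
  e = star e /\ RA e /\ LA e /\ (forall x, mul x e = x /\ mul e x = x).

Definition semi_associative : Prop :=
  forall x y z, G x y -> RA z -> G x (mul y z) /\ mul (mul x y) z = mul x (mul y z).

(* topological partial *-algebra: Hausdorff (locally convex by tvsType) and
   every map y \in R(x) |-> xy is closed (has closed graph). *)
Definition is_topological : Prop :=
  hausdorff_space A /\
  (forall x, closed [set p : A * A | G x p.1 /\ p.2 = mul x p.1]).

(* density for tau^*, the topology generated by the seminorms
   max{p(x), p(x^* )}, i.e. the initial topology of id and star *)
Definition tau_star_dense (B : set A) : Prop :=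
  forall x (U V : set A), nbhs x U -> nbhs (star x) V ->
    exists b, B b /\ U b /\ V (star b).

Definition multiplication_core (e : A) (B : set A) : Prop :=
  B 0 /\ (forall (l : Cplx R) b c, B b -> B c -> B (l *: b + c)) /\
  B `<=` RA /\
  B e /\
  (forall b c, B b -> B c -> B (mul b c)) /\
  tau_star_dense B /\
  (forall b, B b -> continuous (fun x => mul x b)) /\
  (forall b c x, B b -> B c -> mul (star b) (mul x c) = mul (mul (star b) x) c).

Definition positive_sesquilinear (phi : A -> A -> Cplx R) : Prop :=
  (forall (l : Cplx R) x y z, phi (l *: x + y) z = l * phi x z + phi y z) /\
  (forall (l : Cplx R) x y z, phi x (l *: y + z) = (l^*)%R * phi x y + phi x z) /\
  (forall x, 0 <= phi x x).

(* ips-form with core B.  Density of {b + N_phi : b in B} in the completion of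
   A/N_phi is written out as density in the phi-seminorm. *)
Definition ips_form (B : set A) (phi : A -> A -> Cplx R) : Prop :=
  positive_sesquilinear phi /\
  B `<=` RA /\
  (forall x (eps : R), 0 < eps -> exists b, B b /\ phi (x - b) (x - b) < eps%:C) /\
  (forall x a b, B a -> B b -> phi (mul x a) b = phi a (mul (star x) b)) /\
  (forall x y a b, G x y -> B a -> B b ->
      phi (mul (star x) a) (mul y b) = phi a (mul (mul x y) b)).

Definition P_B (B : set A) : set (A -> A -> Cplx R) :=
  [set phi | ips_form B phi /\ continuous (fun p : A * A => phi p.1 p.2)].

Definition sufficient (M : set (A -> A -> Cplx R)) : Prop :=
  forall x, (forall phi, M phi -> phi x x = 0) -> x = 0.

Definition Aplus (B : set A) (M : set (A -> A -> Cplx R)) : set A :=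
  [set x | forall phi a, M phi -> B a -> 0 <= phi (mul x a) a].

Definition leK (B : set A) (M : set (A -> A -> Cplx R)) (x y : A) : Prop :=
  Aplus B M (y - x).

Definition ReA (x : A) : A := (2%:R)^-1 *: (x + star x).
Definition ImA (x : A) : A := (2%:R * 'i)^-1 *: (x - star x).

Definition Kbounded (B : set A) (M : set (A -> A -> Cplx R)) (e x : A) : Prop :=
  exists gamma : R, 0 <= gamma /\
    leK B M (ReA x) (gamma%:C *: e) /\ leK B M (- ReA x) (gamma%:C *: e) /\
    leK B M (ImA x) (gamma%:C *: e) /\ leK B M (- ImA x) (gamma%:C *: e).

Definition Ab_h (B : set A) (M : set (A -> A -> Cplx R)) (e : A) : set A :=
  [set x | x = star x /\ Kbounded B M e x].

Definition normb (B : set A) (M : set (A -> A -> Cplx R)) (e x : A) : R :=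
  inf [set gamma : R | 0 < gamma /\
        leK B M (- (gamma%:C *: e)) x /\ leK B M x (gamma%:C *: e)].

End PartialStarAlgebra.

(* Main.v *)
Require Import Defs.
From HB Require Import structures.
From mathcomp Require Import all_boot all_order all_algebra.
From mathcomp Require Import all_classical all_reals all_analysis.
From mathcomp Require Import complex.
From mathcomp Require Import lra.
Import Order.TTheory GRing.Theory Num.Theory.
Local Open Scope classical_set_scope.
Local Open Scope ring_scope.
Local Open Scope complex_scope.

Lemma cpos_small (R : realType) (z : Cplx R) : 0 <= z ->
  (forall eps : R, 0 < eps -> z < eps%:C) -> z = 0.
Proof.
case: z => zr zi; rewrite lecE /=; move=> /andP[H1 zr0] h; move/eqP: H1 => zi0.
have [zr0'|] := eqVneq zr 0; first by rewrite zr0' zi0.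
move=> zrn; have zp : 0 < zr by rewrite lt_neqAle eq_sym zrn.
by move: (h _ zp); rewrite ltcE /= ltxx andbF.
Qed.

Lemma cbetween (R : realType) (z w : Cplx R): 0 <= w ->
  (forall eps:R, 0<eps -> exists g:R, 0 < g /\ g < eps /\
     0 <= z + g%:C * w /\ 0 <= g%:C * w - z) -> z = 0.
Proof.
case: z => zr zi; case: w => wr wi; rewrite lecE /=; move=> /andP[H1 wr0] h; move/eqP: H1 => wi0.
have [g [g0 [_ [h1 h2]]]] := h 1 ltr01.
move: h1 h2; rewrite !lecE /= wi0 ?mul0r ?mulr0 ?subr0 ?addr0 ?add0r ?sub0r.
move=> /andP[H1 _] _; move/eqP: H1 => zi0.
have zrb : forall eps, 0 < eps -> `|zr| <= eps * wr.
  move=> eps eps0; have [g' [g0' [ge [h1 h2]]]] := h eps eps0.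
  move: h1 h2; rewrite !lecE /= wi0 ?mul0r ?mulr0 ?subr0 ?addr0 ?add0r ?sub0r.
  move=> /andP[_ h1] /andP[_ h2].
  rewrite ler_norml; apply/andP; split; nra.
apply/eqP; rewrite eq_complex /= zi0 eqxx andbT -normr_eq0 eq_le normr_ge0 andbT.
have [wr00|wrn] := eqVneq wr 0; first by have := zrb 1 ltr01; rewrite wr00 mulr0.
have wp : 0 < wr by rewrite lt_neqAle eq_sym wrn.
apply/ler_addgt0Pr => y y0; rewrite add0r.
have := zrb (y / wr) (divr_gt0 y0 wp); rewrite divfK //; lra.
Qed.
Lemma conj_realC (R : realType) (r : R) : ((r%:C : Cplx R)^*)%R = r%:C.
Proof. apply/eqP; rewrite -CrealE realE ?ler0c. rewrite !lecR. exact: le_total. Qed.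

Set Implicit Arguments.
Unset Strict Implicit.
Section Main.
Variables (R : realType) (A : tvsType R[i]) (star : A -> A)
  (G : A -> A -> Prop) (mul : A -> A -> A) (e : A) (B : set A)
  (M : set (A -> A -> Cplx R)).
Hypotheses (hPSA : is_partial_star_algebra star G mul)
  (hU : is_unit star G mul e) (hC : multiplication_core star G mul e B)
  (hM : M `<=` P_B star G mul B) (hS : sufficient M).

Lemma BRA : B `<=` RA G.
Proof. by case: hC => [_ [_ [h _]]]. Qed.

Lemma Be : B e.
Proof. by case: hC => [_ [_ [_ [h _]]]]. Qed.

Lemma Bcl (l : Cplx R) b c : B b -> B c -> B (l *: b + c).
Proof. by case: hC => [_ [h _]]; apply: h. Qed.

Lemma mulDl (l : Cplx R) x1 x2 a : B a -> mul (l *: x1 + x2) a = l *: mul x1 a + mul x2 a.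
Proof.
move=> Ba; have Ra := BRA Ba; case: hPSA => [_ [_ [_ [_ [hl _]]]]].
exact: (hl l x1 x2 a (Ra x1) (Ra x2)).2.
Qed.

Lemma mulDr (l : Cplx R) x b c : B b -> B c -> mul x (l *: b + c) = l *: mul x b + mul x c.
Proof.
move=> Bb Bc; case: hPSA => [_ [_ [_ [hr _]]]].
exact: (hr l x b c (BRA Bb x) (BRA Bc x)).2.
Qed.

Lemma mul0l a : B a -> mul 0 a = 0.
Proof.
move=> Ba; have := mulDl 1 0 0 Ba; rewrite !scale1r addr0 => h.
by rewrite -[LHS](addrK (mul 0 a)) -h subrr.
Qed.

Lemma mulZl (l : Cplx R) x a : B a -> mul (l *: x) a = l *: mul x a.
Proof. by move=> Ba; have := mulDl l x 0 Ba; rewrite !addr0 mul0l // addr0. Qed.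

Lemma mulD1l x y a : B a -> mul (x + y) a = mul x a + mul y a.
Proof. by move=> Ba; have := mulDl 1 x y Ba; rewrite !scale1r. Qed.

Lemma mulNl x a : B a -> mul (- x) a = - mul x a.
Proof. by move=> Ba; rewrite -scaleN1r mulZl // scaleN1r. Qed.

Lemma mulBl x y a : B a -> mul (x - y) a = mul x a - mul y a.
Proof. by move=> Ba; rewrite mulD1l // mulNl. Qed.

Lemma mulxe x : mul x e = x.
Proof. by case: hU => [_ [_ [_ h]]]; case: (h x). Qed.

Lemma mulex x : mul e x = x.
Proof. by case: hU => [_ [_ [_ h]]]; case: (h x). Qed.

Section Phi.
Variable phi : A -> A -> Cplx R.
Hypothesis hphi : positive_sesquilinear phi.

Lemma phiDl (l : Cplx R) x y z : phi (l *: x + y) z = l * phi x z + phi y z.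
Proof. by case: hphi => [h _]; apply: h. Qed.

Lemma phiDr (l : Cplx R) x y z : phi x (l *: y + z) = (l^*)%R * phi x y + phi x z.
Proof. by case: hphi => [_ [h _]]; apply: h. Qed.

Lemma phi_ge0 x : 0 <= phi x x.
Proof. by case: hphi => [_ [_ h]]; apply: h. Qed.

Lemma phi0l z : phi 0 z = 0.
Proof.
have := phiDl 1 0 0 z; rewrite scale1r addr0 !mul1r => h.
by rewrite -[LHS](addrK (phi 0 z)) -h subrr.
Qed.

Lemma phi0r z : phi z 0 = 0.
Proof.
have := phiDr 1 z 0 0; rewrite scale1r addr0 conjC1 !mul1r => h.
by rewrite -[LHS](addrK (phi z 0)) -h subrr.
Qed.

Lemma phiZl (l : Cplx R) x z : phi (l *: x) z = l * phi x z.
Proof. by have := phiDl l x 0 z; rewrite addr0 phi0l addr0. Qed.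

Lemma phiZr (l : Cplx R) x z : phi x (l *: z) = (l^*)%R * phi x z.
Proof. by have := phiDr l x z 0; rewrite addr0 phi0r addr0. Qed.

Lemma phiD1l x y z : phi (x + y) z = phi x z + phi y z.
Proof. by have := phiDl 1 x y z; rewrite scale1r mul1r. Qed.

Lemma phiD1r x y z : phi z (x + y) = phi z x + phi z y.
Proof. by have := phiDr 1 z x y; rewrite scale1r conjC1 mul1r. Qed.

Lemma phiNl x z : phi (- x) z = - phi x z.
Proof. by rewrite -scaleN1r phiZl mulN1r. Qed.

Lemma phiNr x z : phi z (- x) = - phi z x.
Proof. by rewrite -scaleN1r phiZr rmorphN1 mulN1r. Qed.

End Phi.

Lemma Mps phi : M phi -> positive_sesquilinear phi.
Proof. by move=> /hM [[h _] _]. Qed.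


Lemma starD (l : Cplx R) x y : star (l *: x + y) = (l^*)%R *: star x + star y.
Proof. by case: hPSA => [_ [h _]]; apply: h. Qed.

Lemma star0 : star 0 = 0.
Proof.
have := starD 1 0 0; rewrite scale1r addr0 conjC1 scale1r => h.
by rewrite -[LHS](addrK (star 0)) -h subrr.
Qed.

Lemma starD1 x y : star (x + y) = star x + star y.
Proof. by have := starD 1 x y; rewrite !scale1r conjC1 scale1r. Qed.

Lemma starZR (r : R) x : star (r%:C *: x) = r%:C *: star x.
Proof. by have := starD r%:C x 0; rewrite !addr0 star0 addr0 conj_realC. Qed.

Definition P := Aplus mul B M.

Lemma P_add u v : P u -> P v -> P (u + v).
Proof.
move=> Pu Pv phi a Mphi Ba; rewrite mulD1l // phiD1l; last exact: Mps.
by apply: addr_ge0; [apply: Pu | apply: Pv].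
Qed.

Lemma P_scale (c : R) u : 0 <= c -> P u -> P (c%:C *: u).
Proof.
move=> c0 Pu phi a Mphi Ba; rewrite mulZl // phiZl; last exact: Mps.
by apply: mulr_ge0; [rewrite ler0c | apply: Pu].
Qed.

Lemma P_e : P e.
Proof. by move=> phi a Mphi Ba; rewrite mulex; apply: phi_ge0; apply: Mps. Qed.

Lemma P_ge (g : R) : 0 <= g -> P (g%:C *: e).
Proof. by move=> g0; apply: P_scale => //; exact: P_e. Qed.

Definition Bd x (g : R) := leK mul B M (- (g%:C *: e)) x /\ leK mul B M x (g%:C *: e).

Lemma BdP x g : Bd x g <-> P (x + g%:C *: e) /\ P (g%:C *: e - x).
Proof. by rewrite /Bd /leK opprK. Qed.

Lemma Bd_mono x g g' : g <= g' -> Bd x g -> Bd x g'.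
Proof.
move=> gg /BdP [h1 h2]; apply/BdP.
have d0 : 0 <= g' - g by rewrite subr_ge0.
have E : g'%:C *: e = g%:C *: e + (g' - g)%:C *: e.
  by rewrite -scalerDl -rmorphD addrC subrK.
split; rewrite E.
- by rewrite addrA; apply: P_add => //; apply: P_ge.
- by rewrite addrAC; apply: P_add => //; apply: P_ge.
Qed.

Lemma Bd_add x y g1 g2 : Bd x g1 -> Bd y g2 -> Bd (x + y) (g1 + g2).
Proof.
move=> /BdP [h1 h2] /BdP [h3 h4]; apply/BdP.
rewrite rmorphD scalerDl; split.
- by rewrite addrACA; apply: P_add.
- by rewrite opprD addrACA; apply: P_add.
Qed.

Lemma Bd_scale (c : R) x g : 0 <= c -> Bd x g -> Bd (c%:C *: x) (c * g).
Proof.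
move=> c0 /BdP [h1 h2]; apply/BdP.
rewrite rmorphM -scalerA -scalerDr -scalerBr; split; exact: P_scale.
Qed.

Lemma Bd_opp x g : Bd x g -> Bd (- x) g.
Proof.
move=> /BdP [h1 h2]; apply/BdP; rewrite opprK addrC; split => //.
by rewrite addrC.
Qed.

Lemma Bd_scaleR (r : R) x g : Bd x g -> Bd (r%:C *: x) (`|r| * g).
Proof.
move=> h; have [r0|r0] := leP 0 r.
  by rewrite ger0_norm //; apply: Bd_scale.
rewrite ltr0_norm //.
have -> : r%:C *: x = - ((- r)%:C *: x) by rewrite rmorphN scaleNr opprK.
apply: Bd_opp; apply: Bd_scale => //; rewrite oppr_ge0; exact: ltW.
Qed.

Lemma Bd0 g : 0 <= g -> Bd 0 g.
Proof. by move=> g0; apply/BdP; rewrite add0r subr0; split; apply: P_ge. Qed.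

Lemma ReA_herm x : star x = x -> ReA star x = x.
Proof.
move=> sx; rewrite /ReA sx -mulr2n -[x *+ 2]scale1r -scalerMnr scalerMnl scalerA mulVf ?scale1r // pnatr_eq0.
Qed.

Lemma ImA_herm x : star x = x -> ImA star x = 0.
Proof. by move=> sx; rewrite /ImA sx subrr scaler0. Qed.

Lemma herm_Kb x : star x = x ->
  (Kbounded star mul B M e x <-> exists g, 0 <= g /\ Bd x g).
Proof.
move=> sx; rewrite /Kbounded ReA_herm // ImA_herm //; split.
  move=> [g [g0 [h1 [h2 _]]]]; exists g; split => //; apply/BdP; split => //.
  by move: h2; rewrite /leK opprK addrC.
move=> [g [g0 /BdP [h1 h2]]]; exists g; split => //; split => //.
split; first by rewrite /leK opprK addrC.
by rewrite /leK oppr0 subr0 addr0; split; apply: P_ge.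
Qed.

Definition S x := [set g : R | 0 < g /\ Bd x g].

Lemma normbE x : normb mul B M e x = inf (S x).
Proof. by []. Qed.

Definition bdd x := exists g, 0 <= g /\ Bd x g.

Lemma S_ne x : bdd x -> nonempty (S x).
Proof.
move=> [g [g0 hg]]; exists (g + 1); split; first by rewrite ltr_wpDl.
by apply: Bd_mono hg; rewrite lerDl.
Qed.

Lemma S_lb x : lbound (S x) 0.
Proof. by move=> y [y0 _]; exact: ltW. Qed.

Lemma normb_ge0 x : bdd x -> 0 <= normb mul B M e x.
Proof. by move=> bx; rewrite normbE; apply: lb_le_inf; [exact: S_ne | exact: S_lb]. Qed.

Lemma normb_le x g : 0 < g -> Bd x g -> normb mul B M e x <= g.
Proof.
move=> g0 hg; rewrite normbE; apply: ge_inf; last by split.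
by exists 0; exact: S_lb.
Qed.

Lemma normb_glb x c : bdd x -> (forall g, 0 < g -> Bd x g -> c <= g) ->
  c <= normb mul B M e x.
Proof.
move=> bx h; rewrite normbE; apply: lb_le_inf; first exact: S_ne.
by move=> g [g0 hg]; apply: h.
Qed.

Lemma bdd_scale (r : R) x : bdd x -> bdd (r%:C *: x).
Proof.
move=> [g [g0 hg]]; exists (`|r| * g); split; first exact: mulr_ge0.
exact: Bd_scaleR.
Qed.

Lemma hom_le (r : R) x : r != 0 -> bdd x ->
  normb mul B M e (r%:C *: x) <= `|r| * normb mul B M e x.
Proof.
move=> r0 bx; have rp : 0 < `|r| by rewrite normr_gt0.
rewrite -ler_pdivrMl //; apply: normb_glb => // g g0 hg.
rewrite ler_pdivrMl //; apply: normb_le; first exact: mulr_gt0.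
exact: Bd_scaleR.
Qed.

Lemma normb0 : normb mul B M e 0 = 0.
Proof.
apply/eqP; rewrite eq_le; apply/andP; split; last first.
  by apply: normb_ge0; exists 0; split => //; exact: Bd0.
apply/ler_addgt0Pr => g g0; rewrite add0r; apply: normb_le => //.
by apply: Bd0; exact: ltW.
Qed.

Lemma hom (r : R) x : bdd x ->
  normb mul B M e (r%:C *: x) = `|r| * normb mul B M e x.
Proof.
move=> bx; have [->|r0] := eqVneq r 0.
  by rewrite scale0r normr0 mul0r normb0.
apply/eqP; rewrite eq_le hom_le //=.
have rp : 0 < `|r| by rewrite normr_gt0.
have ri0 : r^-1 != 0 by rewrite invr_eq0.
have := hom_le ri0 (bdd_scale r bx).
rewrite scalerA -rmorphM mulVf // scale1r normfV => h.
by rewrite -ler_pdivlMl.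
Qed.

Lemma tri x y : bdd x -> bdd y ->
  normb mul B M e (x + y) <= normb mul B M e x + normb mul B M e y.
Proof.
move=> bx by_.
have h : forall g2, 0 < g2 -> Bd y g2 ->
    normb mul B M e (x + y) - g2 <= normb mul B M e x.
  move=> g2 g20 h2; apply: normb_glb => // g1 g10 h1.
  rewrite lerBlDr; apply: normb_le; first exact: addr_gt0.
  exact: Bd_add.
have : normb mul B M e (x + y) - normb mul B M e x <= normb mul B M e y.
  apply: normb_glb => // g2 g20 h2.
  by have := h g2 g20 h2; rewrite lerBlDr lerBlDl addrC.
by rewrite lerBlDl addrC.
Qed.

Lemma Mips phi : M phi -> ips_form star G mul B phi.
Proof. by move=> /hM [h _]. Qed.

Lemma definite x : star x = x -> bdd x -> normb mul B M e x = 0 -> x = 0.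
Proof.
move=> sx bx n0.
have small : forall eps, 0 < eps -> exists g, 0 < g /\ g < eps /\ Bd x g.
  move=> eps eps0; have : inf (S x) < eps by rewrite -normbE n0.
  move=> /(inf_lt (S_ne bx)) [g [g0 hg] ge].
  by exists g.
have step2 : forall phi a, M phi -> B a -> phi (mul x a) a = 0.
  move=> phi a Mphi Ba; have ps := Mps Mphi.
  apply: (@cbetween R _ _ (phi_ge0 ps a)) => eps eps0.
  have [g [g0 [ge /BdP [h1 h2]]]] := small eps eps0.
  exists g; split => //; split => //; split.
  - have := h1 phi a Mphi Ba.
    by rewrite mulD1l // mulZl // mulex phiD1l // phiZl.
  - have := h2 phi a Mphi Ba.
    by rewrite mulBl // mulZl // mulex phiD1l // phiNl // phiZl.
apply: hS => phi Mphi; have ps := Mps Mphi.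
have [_ [_ [dens [adj _]]]] := Mips Mphi.
have step3 : forall b, B b -> phi (mul x b) e = 0 /\ phi x b = 0.
  move=> b Bb.
  have Hq : forall l : Cplx R,
      l * phi (mul x b) e + (l^*)%R * phi x b = 0.
    move=> l; have := step2 phi (l *: b + e) Mphi (Bcl l Bb Be).
    have Be1 := Be; rewrite mulDr // mulxe phiDl // !phiDr // step2 //.
    have := step2 phi e Mphi Be; rewrite mulxe => ->.
    by rewrite mulr0 add0r addr0.
  have H1 := Hq 1; have H2 := Hq 'i%R.
  rewrite conjC1 !mul1r in H1; rewrite conjCi in H2.
  move/eqP: H1; rewrite addr_eq0 => /eqP H1.
  rewrite H1 mulrN mulNr -opprD in H2.
  move/eqP: H2; rewrite oppr_eq0 -mulr2n mulrn_eq0 /= mulf_eq0 (negbTE (neq0Ci _)) /=.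
  move=> /eqP q0; split => //; by rewrite H1 q0 oppr0.
have step4 : forall b, B b -> phi b x = 0.
  move=> b Bb; have Be1 := Be; rewrite -{1}(mulxe x) -{1}sx -adj //.
  by case: (step3 b Bb).
apply: (@cpos_small R _ (phi_ge0 ps x)) => eps eps0.
have [b [Bb hb]] := dens x eps eps0.
have E : phi (x - b) (x - b) = phi x x + phi b b.
  rewrite phiD1l // phiNl // !phiD1r // !phiNr // (step4 b Bb).
  by case: (step3 b Bb) => _ ->; rewrite oppr0 !addr0 sub0r opprK.
rewrite E in hb; apply: le_lt_trans hb; rewrite lerDl; exact: phi_ge0.
Qed.

Lemma Abh_bdd x : Ab_h star mul B M e x -> star x = x /\ bdd x.
Proof. by move=> [sx kx]; split => //; apply/(herm_Kb (esym sx)). Qed.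

Lemma Abh_of x : star x = x -> bdd x -> Ab_h star mul B M e x.
Proof. by move=> sx bx; split => //; apply/(herm_Kb sx). Qed.

Lemma main_sec :
  (Ab_h star mul B M e 0 /\
   (forall x y, Ab_h star mul B M e x -> Ab_h star mul B M e y ->
      Ab_h star mul B M e (x + y)) /\
   (forall (r : R) x, Ab_h star mul B M e x -> Ab_h star mul B M e (r%:C *: x))) /\
  (forall x, Ab_h star mul B M e x -> 0 <= normb mul B M e x) /\
  (forall x, Ab_h star mul B M e x -> normb mul B M e x = 0 -> x = 0) /\
  (forall (r : R) x, Ab_h star mul B M e x ->
      normb mul B M e (r%:C *: x) = `|r| * normb mul B M e x) /\
  (forall x y, Ab_h star mul B M e x -> Ab_h star mul B M e y ->
      normb mul B M e (x + y) <= normb mul B M e x + normb mul B M e y).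
Proof.
split; [split; [|split] | split; [|split; [|split]]].
- by apply: Abh_of; [exact: star0 | exists 0; split => //; exact: Bd0].
- move=> x y /Abh_bdd [sx [g1 [g10 h1]]] /Abh_bdd [sy [g2 [g20 h2]]].
  apply: Abh_of; first by rewrite starD1 sx sy.
  by exists (g1 + g2); split; [exact: addr_ge0 | exact: Bd_add].
- move=> r x /Abh_bdd [sx bx]; apply: Abh_of; last exact: bdd_scale.
  by rewrite starZR sx.
- by move=> x /Abh_bdd [_ bx]; exact: normb_ge0.
- by move=> x /Abh_bdd [sx bx]; exact: definite.
- by move=> r x /Abh_bdd [_ bx]; exact: hom.
- by move=> x y /Abh_bdd [_ bx] /Abh_bdd [_ by_]; exact: tri.
Qed.

End Main.
Unset Implicit Arguments.

Theorem lemma5p19 (R : realType) (A : tvsType R[i]) (star : A -> A)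
    (G : A -> A -> Prop) (mul : A -> A -> A) (e : A) (B : set A)
    (M : set (A -> A -> Cplx R)) :
  is_partial_star_algebra star G mul ->
  semi_associative G mul ->
  is_topological G mul ->
  is_unit star G mul e ->
  multiplication_core star G mul e B ->
  M `<=` P_B star G mul B ->
  sufficient M ->
  (* (A_b(M))_h is a real vector space *)
  (Ab_h star mul B M e 0 /\
   (forall x y, Ab_h star mul B M e x -> Ab_h star mul B M e y ->
      Ab_h star mul B M e (x + y)) /\
   (forall (r : R) x, Ab_h star mul B M e x -> Ab_h star mul B M e (r%:C *: x))) /\
  (* and ||.||_b is a norm on it *)
  (forall x, Ab_h star mul B M e x -> 0 <= normb mul B M e x) /\
  (forall x, Ab_h star mul B M e x -> normb mul B M e x = 0 -> x = 0) /\
  (forall (r : R) x, Ab_h star mul B M e x ->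
      normb mul B M e (r%:C *: x) = `|r| * normb mul B M e x) /\
  (forall x y, Ab_h star mul B M e x -> Ab_h star mul B M e y ->
      normb mul B M e (x + y) <= normb mul B M e x + normb mul B M e y).
Proof.
move=> h1 _ _ h4 h5 h6 h7.
exact: (main_sec h1 h4 h5 h6 h7).
Qed.
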